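(* The set $R_{1,1,1}$ of Riordan matrices whose $A$-sequence has the form $(1,a_1,a_2,\ldots)$ and whose $Z$-sequence has the form $(z_0,0,z_2,\ldots)$ with $z_0=a_1$ (i.e. $a_0=1$, $z_0=a_1$, $z_1=0$) is a subgroup of the Riordan group.
   Context: Let $K$ be $\mathbb{R}$ or $\mathbb{C}$. A (proper) Riordan matrix is a pair $(g,f)$ of formal power series in $K[[t]]$ with $g(0)=1$, $f(0)=0$, $f'(0)\neq 0$ (the normalization $g(0)=1$ is a standing assumption), identified with the lower triangular matrix with entries $[t^n]g(t)f(t)^k$. The Riordan group is the set of these matrices under matrix multiplication, $(g_1,f_1)(g_2,f_2)=(g_1\,g_2(f_1),\,f_2(f_1))$, with identity $(1,t)$. The $A$-sequence $(a_j)$ of $(g,f)$ is the unique sequence whose generating function $A(t)$ satisfies $f(t)=tA(f(t))$; the $Z$-sequence $(z_j)$ is the unique sequence whose generating function $Z(t)$ satisfies $g(t)=1/(1-tZ(f(t)))$. *)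

(* Defs.v *)
From mathcomp Require Import all_boot all_order all_algebra.
Set Implicit Arguments. Unset Strict Implicit. Unset Printing Implicit Defensive.
Import GRing.Theory Num.Theory.
Local Open Scope ring_scope.

Section FPS.
Variable K : numFieldType.

Definition ps := nat -> K.

Definition ps1 : ps := fun n => (n == 0%N)%:R.
Definition psX : ps := fun n => (n == 1%N)%:R.
Definition pssub (a b : ps) : ps := fun n => a n - b n.
Definition psmul (a b : ps) : ps :=
  fun n => \sum_(i < n.+1) a i * b (n - i)%N.
Definition pspow (a : ps) (k : nat) : ps := iter k (psmul a) ps1.
(* composition g(f); used only for f with f 0 = 0, in which case
   [t^n] f^k = 0 for k > n, so the finite sum is the exact coefficient *)
Definition pscomp (g f : ps) : ps :=
  fun n => \sum_(k < n.+1) g k * pspow f k n.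

Definition riordan (p : ps * ps) : Prop :=
  p.1 0%N = 1 /\ p.2 0%N = 0 /\ p.2 1%N != 0.

Definition riordan_mul (p q : ps * ps) : ps * ps :=
  (psmul p.1 (pscomp q.1 p.2), pscomp q.2 p.2).

Definition riordan_id : ps * ps := (ps1, psX).

Definition is_Aseq (f A : ps) : Prop := f = psmul psX (pscomp A f).

(* Z is the Z-sequence of (g,f) : g(t) = 1/(1 - t Z(f(t))),
   i.e. g(t) * (1 - t Z(f(t))) = 1 *)
Definition is_Zseq (g f Z : ps) : Prop :=
  psmul g (pssub ps1 (psmul psX (pscomp Z f))) = ps1.

Definition R111 (p : ps * ps) : Prop :=
  riordan p /\
  exists A Z : ps, [/\ is_Aseq p.2 A, is_Zseq p.1 p.2 Z,
                       A 0%N = 1, Z 0%N = A 1%N & Z 1%N = 0].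
End FPS.

(* Main.v *)
Require Import Defs.
From mathcomp Require Import all_boot all_order all_algebra.
From mathcomp Require Import ring zify.
From Stdlib Require Import FunctionalExtensionality.
Set Implicit Arguments. Unset Strict Implicit. Unset Printing Implicit Defensive.
Import GRing.Theory Num.Theory.
Local Open Scope ring_scope.

Section Fix.
Variable K : numFieldType.
Variable step : (nat -> K) -> nat -> K.
Hypothesis loc : forall a b n, (forall i, (i < n)%N -> a i = b i) -> step a n = step b n.
Fixpoint build n : seq K :=
  if n is m.+1 then rcons (build m) (step (fun i => nth 0 (build m) i) m) else [::].
Definition fixA m := step (fun i => nth 0 (build m) i) m.
Lemma size_build n : size (build n) = n.
Proof. by elim: n => //= n IH; rewrite size_rcons IH. Qed.
Lemma nth_build n i : (i < n)%N -> nth 0 (build n) i = fixA i.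
Proof.
elim: n => // n IH Hi; rewrite /= nth_rcons size_build.
case: ltnP => [/IH //|Hin].
have /eqP -> : i == n by rewrite eqn_leq Hin -ltnS Hi.
by rewrite eqxx.
Qed.
Lemma fixA_eq m : fixA m = step fixA m.
Proof. by apply: loc => i Hi; apply: nth_build. Qed.
Lemma fix_exists : exists A, forall m, A m = step A m.
Proof. by exists fixA; apply: fixA_eq. Qed.
End Fix.

Section PS.
Variable K : numFieldType.
Implicit Types f g A Z a b B : ps K.

Lemma pspowS f k n : pspow f k.+1 n = psmul f (pspow f k) n.
Proof. by []. Qed.

Lemma pspow_lt f k n : f 0%N = 0 -> (n < k)%N -> pspow f k n = 0.
Proof.
move=> f0; elim: k n => // k IH n Hn.
rewrite pspowS /psmul big1 // => [[i Hi]] _ /=.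
case: i Hi => [|i] Hi; first by rewrite f0 mul0r.
rewrite IH ?mulr0 //; lia.
Qed.

Lemma pspow_nn f n : f 0%N = 0 -> pspow f n n = f 1%N ^+ n.
Proof.
move=> f0; elim: n => [|n IH]; first by rewrite expr0.
rewrite pspowS /psmul big_ord_recl f0 mul0r add0r big_ord_recl /= subn1 /= IH.
rewrite big1 ?addr0 ?exprS //= => [[i Hi]] _ /=.
rewrite pspow_lt ?mulr0 //; rewrite /bump /=; lia.
Qed.

Lemma psmulX0 B : psmul (psX K) B 0%N = 0.
Proof. by rewrite /psmul big_ord1 /psX /= mul0r. Qed.

Lemma psmulXS B n : psmul (psX K) B n.+1 = B n.
Proof.
rewrite /psmul big_ord_recl big_ord_recl big1 /=.
  by rewrite /psX /= mul0r mul1r add0r addr0 subn1.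
by move=> i _; rewrite /psX /= mul0r.
Qed.

Lemma psmul1r a n : psmul a (ps1 K) n = a n.
Proof.
rewrite /psmul big_ord_recr big1 /= ?subnn ?mulr1 ?add0r // => i _.
rewrite /ps1 subn_eq0 leqNgt ltn_ord /= mulr0 //.
Qed.

Lemma psmul_0 a b : psmul a b 0%N = a 0%N * b 0%N.
Proof. by rewrite /psmul big_ord1. Qed.
Lemma psmul_1 a b : psmul a b 1%N = a 0%N * b 1%N + a 1%N * b 0%N.
Proof. by rewrite /psmul !big_ord_recr big_ord0 /= add0r. Qed.
Lemma psmul_2 a b : psmul a b 2%N = a 0%N * b 2%N + a 1%N * b 1%N + a 2%N * b 0%N.
Proof. by rewrite /psmul !big_ord_recr big_ord0 /= add0r. Qed.

Lemma pspow1 f n : pspow f 1%N n = f n.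
Proof. exact: psmul1r. Qed.

Lemma pscomp_0 B f : pscomp B f 0%N = B 0%N.
Proof. by rewrite /pscomp big_ord1 /pspow /= /(ps1 K) /= mulr1. Qed.
Lemma pscomp_1 B f : f 0%N = 0 -> pscomp B f 1%N = B 1%N * f 1%N.
Proof.
move=> f0; rewrite /pscomp !big_ord_recr big_ord0 /= add0r psmul1r.
by rewrite /ps1 /= mulr0 add0r.
Qed.
Lemma pscomp_2 B f : f 0%N = 0 -> pscomp B f 2%N = B 1%N * f 2%N + B 2%N * f 1%N ^+ 2.
Proof.
move=> f0; rewrite /pscomp !big_ord_recr big_ord0 /= add0r !psmul1r -(pspow_nn _ f0).
by rewrite /ps1 /= mulr0 add0r.
Qed.

Lemma Aseq_exists f : f 0%N = 0 -> f 1%N != 0 -> exists A, is_Aseq f A.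
Proof.
move=> f0 f1.
pose step (a : nat -> K) n :=
  (f n.+1 - \sum_(k < n) a k * pspow f k n) / f 1%N ^+ n.
have [A HA] : exists A, forall m, A m = step A m.
  apply: fix_exists => a b n H; rewrite /step.
  by rewrite (eq_bigr (fun k : 'I_n => b k * pspow f k n)) // => k _; rewrite H.
exists A; apply: functional_extensionality => -[|n].
  by rewrite psmulX0.
rewrite psmulXS /pscomp big_ord_recr /= pspow_nn // HA /step divfK ?expf_neq0 //.
by rewrite addrC subrK.
Qed.

Lemma Zseq_exists g f : g 0%N = 1 -> f 0%N = 0 -> f 1%N != 0 ->
  exists Z, is_Zseq g f Z.
Proof.
move=> g0 f0 f1.
pose step (z : nat -> K) m :=
  (g m.+1 - \sum_(i < m) g i.+1 * pscomp z f (m - i.+1)%N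
     - \sum_(k < m) z k * pspow f k m) / f 1%N ^+ m.
have [Z HZ] : exists Z, forall m, Z m = step Z m.
  apply: fix_exists => a b n H; rewrite /step.
  congr (_ * _); congr (_ - _ - _); last first.
    by apply: eq_bigr => k _; rewrite H.
  apply: eq_bigr => i _; congr (_ * _); rewrite /pscomp.
  apply: eq_bigr => k _; rewrite H //.
  have := ltn_ord i; have := ltn_ord k; lia.
exists Z; apply: functional_extensionality => -[|m].
  by rewrite psmul_0 /pssub psmulX0 g0 /ps1 /= subr0 mulr1.
rewrite {1}/psmul big_ord_recr /= subnn /pssub psmulX0 subr0.
rewrite (eq_bigr (fun i : 'I_m.+1 => - (g i * pscomp Z f (m - i)%N))); last first.
  move=> i _; rewrite subSn; last by have := ltn_ord i.
  by rewrite psmulXS /ps1 /= sub0r mulrN.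
rewrite sumrN big_ord_recl /= subn0 g0 mul1r.
rewrite {1}/pscomp big_ord_recr /= pspow_nn // HZ /step divfK; last first.
  by rewrite expf_neq0.
rewrite /ps1 /=.
set S1 := \sum_(i < m) _.
set S2 := \sum_(i < m) _.
by rewrite mulr1; ring.
Qed.

Lemma subr0_eq' (x y : K) : x - y = 0 -> x = y.
Proof. by move/eqP; rewrite subr_eq0 => /eqP. Qed.

Lemma Arel f A : f 0%N = 0 -> is_Aseq f A -> A 0%N = f 1%N /\ f 2%N = A 1%N * f 1%N.
Proof.
move=> f0 HA.
have h1 := congr1 (fun h => h 1%N) HA; have h2 := congr1 (fun h => h 2%N) HA.
move: h1 h2 => /=; rewrite !psmulXS pscomp_0 pscomp_1 // => -> ->; split => //.
Qed.

Lemma Zrel g f Z : g 0%N = 1 -> f 0%N = 0 -> is_Zseq g f Z ->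
  g 1%N = Z 0%N /\ g 2%N = g 1%N * Z 0%N + Z 1%N * f 1%N.
Proof.
move=> g0 f0 HZ.
have h1 := congr1 (fun h => h 1%N) HZ; have h2 := congr1 (fun h => h 2%N) HZ.
move: h1 h2 => /=; rewrite psmul_1 psmul_2 /pssub !psmulXS psmulX0 pscomp_0 pscomp_1 //.
rewrite g0 /ps1 /= => e1 e2.
split; apply: subr0_eq'.
  by rewrite -[RHS]e1; ring.
by rewrite -[RHS]e2; ring.
Qed.

Lemma R111E (p : ps K * ps K) : R111 p <->
  [/\ riordan p, p.2 1%N = 1, p.1 1%N = p.2 2%N & p.1 2%N = p.1 1%N ^+ 2].
Proof.
case: p => g f /=; split.
  move=> [[g0 [f0 f1]] [A [Z [HA HZ A0 Z0 Z1]]]] /=.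
  move: (Arel f0 HA) (Zrel g0 f0 HZ) => /= [A0' A1'] [Z0' Z1']; simpl in *.
  have F1 : f 1%N = 1 by rewrite -A0'.
  split => //.
    by rewrite Z0' Z0 A1' F1 mulr1.
  by rewrite Z1' Z1 mul0r addr0 Z0' expr2.
move=> [[g0 [f0 f1]] /= F1 G1 G2]; split; first by [].
have [A HA] := Aseq_exists f0 f1.
have [Z HZ] := Zseq_exists g0 f0 f1.
move: (Arel f0 HA) (Zrel g0 f0 HZ) => [A0' A1'] [Z0' Z1']; simpl in *.
exists A, Z; split => //.
- by rewrite A0'.
- by rewrite -Z0' G1 A1' F1 mulr1.
- apply: subr0_eq'; move: Z1'; rewrite G2 F1 -Z0' => e.
  have : Z 1%N = g 1%N ^+ 2 - g 1%N * g 1%N by rewrite {1}e; ring.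
  by move=> ->; ring.
Qed.
End PS.

Theorem theorem4p4 (K : numFieldType) :
  [/\ R111 (riordan_id K),
      (forall p q : ps K * ps K, R111 p -> R111 q -> R111 (riordan_mul p q))
    & (forall p q : ps K * ps K, R111 p -> riordan q ->
         riordan_mul p q = riordan_id K -> riordan_mul q p = riordan_id K ->
         R111 q)].
Proof.
split.
- apply/R111E; rewrite /riordan_id /riordan /ps1 /psX /=; split => //.
  + by split => //; split => //; apply: oner_neq0.
  + by rewrite expr2 mulr0.
- move=> [g f] [d h] /R111E [[/= g0 [f0 _]] /= F1 G1 G2] /R111E [[/= d0 [h0 _]] /= H1 D1 D2].
  apply/R111E; rewrite /riordan_mul /riordan /=.
  rewrite psmul_0 psmul_1 psmul_2 !pscomp_0 !pscomp_1 // !pscomp_2 //.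
  rewrite g0 d0 h0 F1 H1 G2 D2 G1 D1.
  split; [split; [ring | split => //; rewrite mulr1; apply: oner_neq0] | ring | ring | ring].
- move=> [g f] [d h] /R111E [[/= g0 [f0 _]] /= F1 G1 G2] [/= d0 [h0 _]] E _.
  have E1 := congr1 (fun p => p.1 1%N) E; have E2 := congr1 (fun p => p.1 2%N) E.
  have E3 := congr1 (fun p => p.2 1%N) E; have E4 := congr1 (fun p => p.2 2%N) E.
  move: E1 E2 E3 E4; rewrite /riordan_mul /riordan_id /ps1 /psX /=.
  rewrite psmul_1 psmul_2 !pscomp_0 !pscomp_1 // !pscomp_2 //.
  rewrite g0 d0 F1 G2 G1 !mulr1 !expr1n => e1 e2 e3 e4.
  have Dv : d 1%N = - f 2%N by apply: subr0_eq'; rewrite -[RHS]e1; ring.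
  have Hv : h 2%N = - f 2%N by apply: subr0_eq'; rewrite -[RHS]e4 e3; ring.
  apply/R111E; split => /=.
  + by split => //; split => //=; rewrite e3 oner_neq0.
  + by [].
  + by rewrite Dv Hv.
  + apply: subr0_eq'; rewrite -[RHS]e2 Dv; ring.
Qed.
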